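(* Let $X$ be a real Banach space with $\dim X\ge 2$. Then $S_P(X)<\tfrac12$ if and only if $X$ is uniformly non-square.
   Context: For a real Banach space $X$ with unit sphere $S_X$, the P-angle constant is $S_P(X)=\sup\left\{\frac{\|x+y\|^2+\|x-y\|^2-4}{2\|x+y\|\,\|x-y\|}: x,y\in S_X,\ x\neq \pm y\right\}$. $X$ is uniformly non-square if there exists $\delta\in(0,1)$ such that for all $x,y\in S_X$, either $\frac{\|x-y\|}{2}\le 1-\delta$ or $\frac{\|x+y\|}{2}\le 1-\delta$. *)

(* Defs.v *)
From HB Require Import structures.
From mathcomp Require Import all_boot all_order all_algebra.
From mathcomp Require Import all_classical all_reals all_analysis.
Set Implicit Arguments. Unset Strict Implicit. Unset Printing Implicit Defensive.
Import Order.TTheory GRing.Theory Num.Theory.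
Import numFieldNormedType.Exports.
Local Open Scope classical_set_scope.
Local Open Scope ring_scope.

Definition unit_sphere (R : realType) (X : normedModType R) : set X :=
  [set x | `|x| = 1].

Definition SP_values (R : realType) (X : normedModType R) : set R :=
  [set t | exists x y : X, [/\ `|x| = 1, `|y| = 1, x != y, x != - y &
      t = (`|x + y| ^+ 2 + `|x - y| ^+ 2 - 4) / (2 * `|x + y| * `|x - y|)]].

Definition SP_const (R : realType) (X : normedModType R) : \bar R :=
  ereal_sup [set t%:E | t in SP_values X].

Definition uniformly_non_square (R : realType) (X : normedModType R) : Prop :=
  exists delta : R, 0 < delta < 1 /\
    forall x y : X, `|x| = 1 -> `|y| = 1 ->
      `|x - y| / 2 <= 1 - delta \/ `|x + y| / 2 <= 1 - delta.

Definition dim_ge2 (R : realType) (X : normedModType R) : Prop :=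
  exists x y : X, forall a b : R, a *: x + b *: y = 0 -> a = 0 /\ b = 0.

(* Main.v *)
Require Import Defs.
From HB Require Import structures.
From mathcomp Require Import all_boot all_order all_algebra.
From mathcomp Require Import all_classical all_reals all_analysis.
From mathcomp Require Import lra.
Import Order.TTheory GRing.Theory Num.Theory.
Import numFieldNormedType.Exports.
Local Open Scope classical_set_scope.
Local Open Scope ring_scope.

Lemma alg1 (R : realFieldType) (a b d : R) : 0 < a -> 0 < b -> a <= 2 -> b <= 2 ->
  2 <= a + b -> 0 < d < 1 -> b <= 2 - 2 * d ->
  (a ^+ 2 + b ^+ 2 - 4) / (2 * a * b) <= (1 - d) / 2.
Proof.
move=> a0 b0 a2 b2 ab /andP[d0 d1] bd.
rewrite ler_pdivrMr; last by rewrite !mulr_gt0.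
have h1 : 0 <= (a - 2 + b) * (2 - a) by apply: mulr_ge0; lra.
have h2 : 0 <= (2 - a) * (2 - b) by apply: mulr_ge0; lra.
have h3 : 0 <= (a - 2 + b) * (2 - 2 * d - b) by apply: mulr_ge0; lra.
nra.
Qed.

Lemma alg2 (R : realFieldType) (a b t s w : R) : 2 * t < a -> 2 * t < b -> a <= 2 -> b <= 2 ->
  w < t ^+ 2 -> s + 1/2 <= w -> 1/2 <= w -> 0 <= t ->
  (a ^+ 2 + b ^+ 2 - 4) / (2 * a * b) <= s -> False.
Proof.
move=> ha hb a2 b2 tw sw w2 t0.
have a0 : 0 < a by lra.
have b0 : 0 < b by lra.
rewrite ler_pdivrMr; last by rewrite !mulr_gt0.
have ha2 : 4 * t ^+ 2 < a ^+ 2.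
  have : 0 < (a - 2 * t) * (a + 2 * t) by apply: mulr_gt0; lra.
  nra.
have hb2 : 4 * t ^+ 2 < b ^+ 2.
  have : 0 < (b - 2 * t) * (b + 2 * t) by apply: mulr_gt0; lra.
  nra.
have hab : a * b <= 4.
  have : 0 <= (2 - a) * b by apply: mulr_ge0; lra.
  nra.
case: (lerP 0 s) => s0.
  have : s * (a * b) <= s * 4 by apply: ler_wpM2l.
  nra.
have : s * (a * b) < 0 by rewrite nmulr_rlt0 //; nra.
nra.
Qed.

Lemma two_norm (R : realType) (X : normedModType R) (x y : X) : `|x| = 1 -> 2 <= `|x + y| + `|x - y|.
Proof.
move=> hx.
have -> : 2 = `|(x + y) + (x - y)| :> R.
  by rewrite addrACA subrr addr0 -mulr2n normrMn hx.
exact: ler_normD.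
Qed.

Lemma alg1s (R : realFieldType) (a b d : R) : 0 < a -> 0 < b -> a <= 2 -> b <= 2 ->
  2 <= a + b -> 0 < d < 1 -> a <= 2 - 2 * d ->
  (a ^+ 2 + b ^+ 2 - 4) / (2 * a * b) <= (1 - d) / 2.
Proof.
move=> a0 b0 a2 b2 ab hd ad.
have := @alg1 R b a d b0 a0 b2 a2 _ hd ad; rewrite (addrC (b ^+ 2)) (mulrAC 2 b a); apply.
by rewrite addrC.
Qed.

Theorem theorem5p1 (R : realType) (X : completeNormedModType R) :
  dim_ge2 X ->
  ((SP_const X < (1 / 2 : R)%:E)%E <-> uniformly_non_square X).
Proof.
move=> _.
have nrm2 : forall x y : X, `|x| = 1 -> `|y| = 1 -> `|x + y| <= 2 /\ `|x - y| <= 2.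
  move=> x y hx hy; split.
    by apply: (le_trans (ler_normD _ _)); rewrite hx hy.
  by apply: (le_trans (ler_normB _ _)); rewrite hx hy.
split.
- move=> hlt.
  have ub : forall t, SP_values X t -> (t%:E <= SP_const X)%E.
    by move=> t ht; apply: ereal_sup_ubound; exists t.
  have [s [s12 hs]] : exists s : R, s < 1/2 /\ forall t, SP_values X t -> t <= s.
    move: hlt ub; case: (SP_const X) => [r| |] hlt ub.
    + exists r; split; first by rewrite lte_fin in hlt.
      by move=> t ht; rewrite -lee_fin; apply: ub.
    + by [].
    + exists 0; split; first lra.
      by move=> t ht; have := ub t ht; rewrite leeNy_eq.
  have [w [w1 w2 w3]] : exists w : R, [/\ s + 1/2 <= w, 1/2 <= w & w < 1].
    case: (lerP s 0) => s0.
      by exists (1/2); split; lra.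
    by exists (s + 1/2); split; lra.
  exists ((1 - w) / 2); split; first by apply/andP; split; lra.
  move=> x y hx hy.
  case: (lerP (`|x - y| / 2) (1 - (1 - w) / 2)) => h1; first by left.
  case: (lerP (`|x + y| / 2) (1 - (1 - w) / 2)) => h2; first by right.
  exfalso.
  have [a2 b2] := nrm2 x y hx hy.
  apply: (@alg2 R `|x + y| `|x - y| ((1 + w) / 2) s w).
  + lra.
  + lra.
  + exact: a2.
  + exact: b2.
  + nra.
  + exact: w1.
  + exact: w2.
  + lra.
  + apply: hs; exists x, y; split => //.
    * apply/eqP => exy; move: h1; rewrite exy subrr normr0; lra.
    * apply/eqP => exy; move: h2; rewrite exy addNr normr0; lra.
- move=> [d [/andP[d0 d1] hd]].
  apply: (le_lt_trans (y := ((1 - d) / 2)%:E)); last by rewrite lte_fin; lra.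
  apply: ge_ereal_sup => _ [t [x [y [hx hy nxy nxmy ->]]] <-].
  rewrite lee_fin.
  have [a2 b2] := nrm2 x y hx hy.
  have a0 : 0 < `|x + y| by rewrite normr_gt0 addr_eq0.
  have b0 : 0 < `|x - y| by rewrite normr_gt0 subr_eq0.
  have ab : 2 <= `|x + y| + `|x - y| by apply: two_norm.
  have hd' : 0 < d < 1 by apply/andP.
  case: (hd x y hx hy) => h.
  + by apply: alg1 => //; lra.
  + by apply: alg1s => //; lra.
Qed.
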